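(* Let $P=\sum_{i=0}^Nq^iP_i(D)\in\mathbb{C}[q][D]$ with $D=q\frac{d}{dq}$ and $P_i\in\mathbb{C}[D]$. For $r\geq 0$ let $P^{(r)}=\sum_iq^iP_i^{(r)}(D)$, where $P_i^{(r)}$ is the $r$-th formal derivative of the polynomial $P_i$. Let $I=\sum_{i=0}^NI^ih^i$ with $I^i\in\mathbb{C}[[q]]$. Then $I$ is a perturbed solution of $P$ if and only if for every $0\leq s\leq N$ $$\frac{P^{(s)}(I^0)}{s!}+\frac{P^{(s-1)}(I^1)}{(s-1)!}+\cdots+P(I^s)=0.$$
   Context: Put $I_r=\sum_{m=0}^rI^{r-m}(q)\,t^m/m!\in\mathbb{C}[[q]][t]$. Operators in $\mathbb{C}[q][D]$ act on $\mathbb{C}[[q]][t]$ via $D(f(q)t^m)=qf'(q)t^m+mf(q)t^{m-1}$, with $q$ acting by multiplication. $I$ is a perturbed solution of $P$ if $PI_r=0$ for all $0\leq r\leq N$. *)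

(* Defs.v *)
(* Complex numbers are modelled as R[i] = complex R for R : realType. *)
From HB Require Import structures.
From mathcomp Require Import all_boot all_order all_algebra.
From mathcomp Require Export complex.
From mathcomp Require Export reals.
Set Implicit Arguments. Unset Strict Implicit. Unset Printing Implicit Defensive.
Import Order.TTheory GRing.Theory Num.Theory.
Local Open Scope ring_scope.

Section PerturbedDefs.
Variable K : fieldType.

Definition pseries := nat -> K.
(* An element of K[[q]][t], encoded by F m k = coefficient of q^k t^m. *)
Definition pseriest := nat -> nat -> K.

(* D (f(q) t^m) = q f'(q) t^m + m f(q) t^(m-1) *)
Definition Dop (F : pseriest) : pseriest :=
  fun m k => k%:R * F m k + m.+1%:R * F m.+1 k.

Definition qmul (F : pseriest) : pseriest :=
  fun m k => if k is k'.+1 then F m k' else 0.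

Definition polyD (p : {poly K}) (F : pseriest) : pseriest :=
  fun m k => \sum_(j < size p) p`_j * iter j Dop F m k.

Definition opapply (N : nat) (P : nat -> {poly K}) (F : pseriest) : pseriest :=
  fun m k => \sum_(i < N.+1) iter i qmul (polyD (P i) F) m k.

Definition opderiv (r : nat) (P : nat -> {poly K}) : nat -> {poly K} :=
  fun i => (P i)^`(r).

Definition embed (f : pseries) : pseriest :=
  fun m k => if m == 0%N then f k else 0.

Definition Ir (I : nat -> pseries) (r : nat) : pseriest :=
  fun m k => if (m <= r)%N then I (r - m)%N k / (m`!)%:R else 0.

Definition perturbed_solution (N : nat) (P : nat -> {poly K}) (I : nat -> pseries) :=
  forall r : nat, (r <= N)%N -> opapply N P (Ir I r) = (fun _ _ => 0).

End PerturbedDefs.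

(* Main.v *)
Require Import Defs.
From HB Require Import structures.
From mathcomp Require Import all_boot all_order all_algebra complex reals.
From mathcomp Require Import zify ring.
From Stdlib Require Import FunctionalExtensionality.
Import Order.TTheory GRing.Theory Num.Theory.
Local Open Scope ring_scope.

Section Aux.
Variable K : numFieldType.

Definition Dp (G : pseriest K) : pseriest K :=
  fun m k => k%:R * G m k + G m.+1 k.
Definition scale (F : pseriest K) : pseriest K := fun m k => (m`!)%:R * F m k.
Definition polyG (p : {poly K}) (G : pseriest K) : pseriest K :=
  fun m k => \sum_(j < size p) p`_j * iter j Dp G m k.

Lemma scaleDop F : scale (Dop F) = Dp (scale F).
Proof.
apply: functional_extensionality => m; apply: functional_extensionality => k.
rewrite /scale /Dop /Dp factS natrM; ring.
Qed.

Lemma scale_iter i F : scale (iter i (@Dop K) F) = iter i Dp (scale F).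
Proof. by elim: i => //= i IH; rewrite scaleDop IH. Qed.

Lemma scale_polyD p F m k : scale (polyD p F) m k = polyG p (scale F) m k.
Proof.
rewrite /scale /polyD /polyG mulr_sumr; apply: eq_bigr => j _.
by rewrite -scale_iter /scale mulrCA.
Qed.

Lemma sum_widen (f : nat -> K) a b :
  (forall j, (a <= j)%N -> f j = 0) -> (a <= b)%N ->
  \sum_(j < a) f j = \sum_(j < b) f j.
Proof.
move=> H hab; rewrite (big_ord_widen b f hab) big_mkcond.
by apply: eq_bigr => i _; case: leqP => // /H ->.
Qed.

Lemma polyG_formula (p : {poly K}) n (G : pseriest K) m k : (size p <= n)%N ->
  polyG p G m k = \sum_(j < n) (p^`N(j)).[k%:R] * G (m + j)%N k.
Proof.
elim/poly_ind: p n G => [|p c IH] n G.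
  move=> _; rewrite /polyG size_poly0 big_ord0 big1 // => j _.
  by rewrite nderivnC if_same horner0 mul0r.
move=> hs.
have -> : polyG (p * 'X + c%:P) G m k = polyG p (Dp G) m k + c * G m k.
  rewrite /polyG.
  rewrite (@sum_widen (fun j => (p * 'X + c%:P)`_j * iter j Dp G m k) _
     (size p).+1); last first.
    - by rewrite size_MXaddC; case: ifP.
    - by move=> j hj; rewrite nth_default // mul0r.
  rewrite big_ord_recl /= coefD coefMX coefC /= add0r addrC; congr (_ + _).
  apply: eq_bigr => j _; rewrite coefD coefMX coefC /= addr0 add0n.
  by rewrite -iterS iterSr.
move: hs; rewrite size_MXaddC.
have [-> | nzp] := eqVneq p 0.
  rewrite /= mul0r add0r size_poly0; move=> hs.
  rewrite /polyG size_poly0 big_ord0 add0r.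
  case: n hs => [|n] hs.
    by move: hs; case: eqP => // -> _; rewrite big_ord0 mul0r.
  rewrite big_ord_recl big1 ?addr0.
    by rewrite nderivn0 hornerC addn0.
  by move=> j _; rewrite nderivnC /= horner0 mul0r.
rewrite /=; case: n => [//|n] hs.
rewrite (IH n.+1 (Dp G)); last exact: ltnW.
rewrite /= big_ord_recl [in RHS]big_ord_recl /= !addn0 !nderivn0 hornerMXaddC.
have E1 : \sum_(i < n) p^`N(bump 0 i).[k%:R] * Dp G (m + bump 0 i)%N k =
   \sum_(i < n) p^`N(i.+1).[k%:R] * k%:R * G (m + i.+1)%N k +
   \sum_(i < n) p^`N(i.+1).[k%:R] * G (m + i.+2)%N k.
  rewrite -big_split /=; apply: eq_bigr => i _.
  by rewrite /Dp /bump /= add1n -addnS mulrDr mulrA.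
have E2 : \sum_(i < n) (p * 'X + c%:P)^`N(bump 0 i).[k%:R] * G (m + bump 0 i)%N k =
   \sum_(i < n) p^`N(i).[k%:R] * G (m + i.+1)%N k +
   \sum_(i < n) p^`N(i.+1).[k%:R] * k%:R * G (m + i.+1)%N k.
  rewrite -big_split /=; apply: eq_bigr => i _.
  rewrite /bump /= add1n nderivnMXaddC hornerD hornerMX; ring.
have key : \sum_(i < n) p^`N(i).[k%:R] * G (m + i.+1)%N k =
   p^`N(0).[k%:R] * G (m + 1)%N k +
   \sum_(i < n) p^`N(i.+1).[k%:R] * G (m + i.+2)%N k.
  pose F := fun i : nat => p^`N(i).[k%:R] * G (m + i.+1)%N k.
  transitivity (\sum_(i < n.+1) F i).
    by rewrite big_ord_recr /= /F (nderivn_poly0 hs) horner0 mul0r addr0.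
  by rewrite big_ord_recl /F /= addn1.
rewrite E1 E2 key nderivn0 /Dp addn1; ring.
Qed.


Lemma fact_neq0 n : (n`!)%:R != 0 :> K.
Proof. by rewrite pnatr_eq0 -lt0n fact_gt0. Qed.

Lemma polyD_eq p F m k : polyD p F m k = polyG p (scale F) m k / (m`!)%:R.
Proof. by rewrite -scale_polyD /scale mulrC mulKf // fact_neq0. Qed.

Lemma iter_qmul i (H : pseriest K) m k :
  iter i (@qmul K) H m k = if (i <= k)%N then H m (k - i)%N else 0.
Proof.
elim: i k => [|i IH] k /=; first by rewrite subn0.
case: k => [|k] //=; rewrite IH ltnS subSS //.
Qed.

Lemma polyD_embed (q : {poly K}) f k : polyD q (embed f) 0 k = q.[k%:R] * f k.
Proof.
rewrite polyD_eq (@polyG_formula _ (size q).+1) // big_ord_recl /= big1.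
  by rewrite /scale /embed /= nderivn0 addr0 mul1r divr1.
by move=> j _; rewrite /scale /embed /= !mulr0.
Qed.

Lemma rev_sum (g : nat -> K) s :
  \sum_(j < s.+1) g j = \sum_(j < s.+1) g (s - j)%N.
Proof.
rewrite (reindex_inj rev_ord_inj) /=.
by apply: eq_bigr => j _; rewrite subSS.
Qed.

Definition Cs (N : nat) (P : nat -> {poly K}) (I : nat -> pseries K) s k :=
  \sum_(j < s.+1)
        opapply N (opderiv (s - j)%N P) (embed (I j)) 0%N k / ((s - j)`!)%:R.

Lemma main_formula N P I r m k :
  opapply N P (Ir I r) m k =
  if (m <= r)%N then Cs N P I (r - m) k / (m`!)%:R else 0.
Proof.
rewrite /opapply.
under eq_bigr => i _ do rewrite iter_qmul polyD_eq
   (@polyG_formula (P i) (size (P i) + r).+1 _ _ _ (leq_trans (leq_addr r _) (leqnSn _))).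
case: leqP => hmr; last first.
  apply: big1 => i _; case: ifP => // _; rewrite big1 ?mul0r // => j _.
  rewrite /scale /Ir; case: ifP => h; last by rewrite !mulr0.
  exfalso; move: h hmr; clear; lia.
rewrite /Cs.
under [in RHS]eq_bigr => j _ do rewrite /opapply mulr_suml.
rewrite exchange_big mulr_suml /=; apply: eq_bigr => i _.
under [in RHS]eq_bigr => j _ do rewrite iter_qmul polyD_embed.
case: ifP => hik; last by rewrite big1 ?mul0r // => j _; rewrite mul0r.
congr (_ * _); symmetry.
set x := (k - i)%N.
set s := (r - m)%N.
transitivity (\sum_(j < s.+1) (P i)^`N(s - j).[x%:R] * I j x).
  apply: eq_bigr => j _.
  rewrite /opderiv nderivn_def hornerMn -mulr_natr -mulrA [_ * I j x]mulrC mulrA.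
  by rewrite mulfK // fact_neq0.
rewrite (rev_sum (fun j => (P i)^`N(s - j).[x%:R] * I j x)).
transitivity (\sum_(j < s.+1)
   (fun j : nat => if (j <= s)%N then (P i)^`N(j).[x%:R] * I (s - j)%N x else 0) j).
  by apply: eq_bigr => j _; rewrite /= -ltnS (ltn_ord j) subKn // -ltnS.
rewrite (@sum_widen (fun j : nat => if (j <= s)%N then (P i)^`N(j).[x%:R] * I (s - j)%N x else 0) s.+1 (size (P i) + r).+1); last first.
- rewrite ltnS /s; move: hmr; clear; lia.
- by move=> j hj; case: ifP => // h; exfalso; move: h hj; clear; lia.
apply: eq_bigr => j _ /=; rewrite /scale /Ir.
case: ifP => hj; case: ifP => hj2.
- congr (_ * _); rewrite mulrC divfK ?fact_neq0 //.
  have -> : (s - j)%N = (r - (m + j))%N by rewrite /s; move: hj; clear; lia.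
  by [].
- exfalso; move: hj hj2 hmr; rewrite /s; clear; lia.
- exfalso; move: hj hj2 hmr; rewrite /s; clear; lia.
- by rewrite !mulr0.
Qed.


End Aux.

Theorem theorem4p1 (R : realType) (N : nat) (P : nat -> {poly R[i]})
    (I : nat -> pseries R[i]) :
  perturbed_solution N P I <->
  (forall s : nat, (s <= N)%N ->
     (fun k : nat => \sum_(j < s.+1)
        opapply N (opderiv (s - j)%N P) (embed (I j)) 0%N k / ((s - j)`!)%:R)
     = (fun _ => 0)).
Proof.
split.
- move=> H s hs; apply: functional_extensionality => k.
  move: (@main_formula _ N P I s 0 k); rewrite (H s hs) /= subn0 mulr1n divr1.
  by rewrite /Cs => <-.
- move=> H r hr; apply: functional_extensionality => m.
  apply: functional_extensionality => k.
  rewrite main_formula; case: ifP => // hm.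
  have := H (r - m)%N (leq_trans (leq_subr m r) hr).
  move/(congr1 (fun f => f k)) => /= E.
  by rewrite /Cs E mul0r.
Qed.
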